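(* Suppose the model has a single-strain ($I_1$)-infection equilibrium $E_1=(\bar S,\bar V_1,\bar I_1,0)$ and a single-strain ($I_2$)-infection equilibrium $E_2=(\tilde S,\tilde V_1,0,\tilde I_2)$, each with positive listed components. Define $\bar{\mathcal{R}}_2=\frac{1}{\alpha_2}\frac{\partial F_2}{\partial I_2}(\bar S,0)+\frac{k\bar V_1}{\alpha_2}$ and $\tilde{\mathcal{R}}_1=\frac{1}{\alpha_1}\frac{\partial F_1}{\partial I_1}(\tilde S,0)$. If $\bar{\mathcal{R}}_2>1$ and $\tilde{\mathcal{R}}_1>1$, then the model admits an endemic equilibrium $E_3=(S^*,V_1^*,I_1^*,I_2^* )$ with all components positive.
   Context: The model is $\dot S=\Lambda-F_1(S,I_1)-F_2(S,I_2)-\lambda S$, $\dot V_1=rS-(\mu+kI_2)V_1$, $\dot I_1=F_1(S,I_1)-\alpha_1I_1$, $\dot I_2=F_2(S,I_2)+kI_2V_1-\alpha_2I_2$ on $\mathbb{R}^4_+$. The constants $\Lambda,\mu,r,k,\gamma_1,\gamma_2>0$ and $v_1,v_2\ge0$; $\lambda=r+\mu$ and $\alpha_i=\gamma_i+v_i+\mu$. For $i=1,2$ the incidence functions satisfy: - (H1) $F_i(S,I_i)=I_if_i(S,I_i)$ with $F_i,f_i\in C^2(\mathbb{R}^2_+,\mathbb{R}_+)$ and $F_i(0,I_i)=F_i(S,0)=0$; - (H2) $\partial f_i/\partial S>0$ and $\partial f_i/\partial I_i\le0$; - (H3) $\lim_{I_i\to0^+}F_i(S,I_i)/I_i$ exists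 and is positive for $S>0$. *)

(* Defs.v *)
From Stdlib Require Import Reals.
From Coquelicot Require Import Coquelicot.
Open Scope R_scope.

Definition dS (g : R -> R -> R) (S I : R) : R := Derive (fun s => g s I) S.
Definition dI (g : R -> R -> R) (S I : R) : R := Derive (fun i => g S i) I.

Definition C1_2d (g : R -> R -> R) : Prop :=
  (forall S I, ex_derive (fun s => g s I) S /\ ex_derive (fun i => g S i) I) /\
  (forall S I, continuity_2d_pt g S I) /\
  (forall S I, continuity_2d_pt (dS g) S I) /\
  (forall S I, continuity_2d_pt (dI g) S I).

Definition C2_2d (g : R -> R -> R) : Prop :=
  C1_2d g /\ C1_2d (dS g) /\ C1_2d (dI g).

Definition incidence_hyps (F f : R -> R -> R) : Prop :=
  C2_2d F /\ C2_2d f /\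
  (forall S I, 0 <= S -> 0 <= I -> 0 <= F S I /\ 0 <= f S I) /\
  (forall S I, 0 <= S -> 0 <= I -> F S I = I * f S I) /\
  (forall I, 0 <= I -> F 0 I = 0) /\
  (forall S, 0 <= S -> F S 0 = 0) /\
  (forall S I, 0 <= S -> 0 <= I -> dS f S I > 0 /\ dI f S I <= 0) /\
  (forall S, 0 < S -> exists l, 0 < l /\
      filterlim (fun I => F S I / I) (at_right 0) (locally l)).

(* Right-hand side of the model; lambda = r + mu, alpha_i = gamma_i + v_i + mu. *)
Definition rhs_S (Lam mu r : R) (F1 F2 : R -> R -> R) (S V1 I1 I2 : R) : R :=
  Lam - F1 S I1 - F2 S I2 - (r + mu) * S.
Definition rhs_V1 (mu r k : R) (S V1 I1 I2 : R) : R :=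
  r * S - (mu + k * I2) * V1.
Definition rhs_I1 (alpha1 : R) (F1 : R -> R -> R) (S V1 I1 I2 : R) : R :=
  F1 S I1 - alpha1 * I1.
Definition rhs_I2 (alpha2 k : R) (F2 : R -> R -> R) (S V1 I1 I2 : R) : R :=
  F2 S I2 + k * I2 * V1 - alpha2 * I2.

Definition is_equilibrium (Lam mu r k gamma1 gamma2 v1 v2 : R)
    (F1 F2 : R -> R -> R) (S V1 I1 I2 : R) : Prop :=
  0 <= S /\ 0 <= V1 /\ 0 <= I1 /\ 0 <= I2 /\
  rhs_S Lam mu r F1 F2 S V1 I1 I2 = 0 /\
  rhs_V1 mu r k S V1 I1 I2 = 0 /\
  rhs_I1 (gamma1 + v1 + mu) F1 S V1 I1 I2 = 0 /\
  rhs_I2 (gamma2 + v2 + mu) k F2 S V1 I1 I2 = 0.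

(* Main.v *)
Require Import Defs.
From Stdlib Require Import Reals Lra IndefiniteDescription.
From Coquelicot Require Import Coquelicot.
Open Scope R_scope.

Definition cED (f : R -> R) (x : R) : Prop :=
  forall eps, 0 < eps -> exists d, 0 < d /\
    forall y, Rabs (y - x) < d -> Rabs (f y - f x) < eps.

Lemma cED_pt f x : cED f x -> continuity_pt f x.
Proof.
  intros H eps He. destruct (H eps He) as [d [Hd Hf]].
  exists d. split; [lra|]. intros y [_ Hy]. apply Hf. exact Hy.
Qed.

Lemma pt_cED f x : continuity_pt f x -> cED f x.
Proof.
  intros H eps He. destruct (H eps He) as [d [Hd Hf]].
  exists d. split; [lra|]. intros y Hy.
  destruct (Req_dec x y) as [<-|Hne].
  - unfold Rminus. rewrite Rplus_opp_r, Rabs_R0. lra.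
  - apply (Hf y). split; [split; [exact I|exact Hne]|exact Hy].
Qed.

Lemma cED_const c x : cED (fun _ => c) x.
Proof. intros eps He. exists 1. split; [lra|]. intros. unfold Rminus. rewrite Rplus_opp_r, Rabs_R0. lra. Qed.

Lemma cED_plus f g x : cED f x -> cED g x -> cED (fun t => f t + g t) x.
Proof.
  intros Hf Hg eps He.
  destruct (Hf (eps/2)) as [d1 [Hd1 H1]]; [lra|].
  destruct (Hg (eps/2)) as [d2 [Hd2 H2]]; [lra|].
  exists (Rmin d1 d2). split; [apply Rmin_pos; lra|]. intros y Hy.
  assert (A := H1 y ltac:(eapply Rlt_le_trans; [exact Hy| apply Rmin_l])).
  assert (B := H2 y ltac:(eapply Rlt_le_trans; [exact Hy| apply Rmin_r])).
  revert A B. unfold Rabs. repeat destruct Rcase_abs; lra.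
Qed.

Lemma cED_comp2 (f : R -> R -> R) u v x :
  continuity_2d_pt f (u x) (v x) -> cED u x -> cED v x ->
  cED (fun t => f (u t) (v t)) x.
Proof.
  intros Hf Hu Hv eps He.
  destruct (Hf (mkposreal eps He)) as [[d Hd] Hd2]. simpl in Hd2.
  destruct (Hu d Hd) as [d1 [Hd1 H1]].
  destruct (Hv d Hd) as [d2 [Hd2' H2]].
  exists (Rmin d1 d2). split; [apply Rmin_pos; lra|]. intros y Hy.
  apply Hd2.
  - apply H1. eapply Rlt_le_trans; [exact Hy| apply Rmin_l].
  - apply H2. eapply Rlt_le_trans; [exact Hy| apply Rmin_r].
Qed.

Lemma cED_comp (g : R -> R) u x :
  cED u x -> cED g (u x) -> cED (fun t => g (u t)) x.
Proof.
  intros Hu Hg eps He.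
  destruct (Hg eps He) as [d [Hd H]].
  destruct (Hu d Hd) as [d1 [Hd1 H1]].
  exists d1. split; [lra|]. intros y Hy. apply H. apply H1. exact Hy.
Qed.

Lemma cED_lip u x : (forall y, Rabs (u y - u x) <= Rabs (y - x)) -> cED u x.
Proof.
  intros H eps He. exists eps. split; [lra|]. intros y Hy.
  eapply Rle_lt_trans; [apply H|exact Hy].
Qed.

Lemma cED_derive f x : ex_derive f x -> cED f x.
Proof.
  intros H. apply pt_cED. apply continuity_pt_filterlim.
  apply (ex_derive_continuous f x H).
Qed.

Lemma incrS (f : R -> R -> R) :
  (forall S I, ex_derive (fun s => f s I) S) ->
  (forall S I, 0 <= S -> 0 <= I -> dS f S I > 0) ->
  forall I a b, 0 <= I -> 0 <= a -> a < b -> f a I < f b I.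
Proof.
  intros Hd Hp I a b HI Ha Hab.
  destruct (MVT_gen (fun s => f s I) a b (fun s => dS f s I)) as [c [Hc Heq]].
  - intros x _. apply Derive_correct. apply Hd.
  - intros x _. apply continuity_pt_filterlim. exact (ex_derive_continuous (V:=R_NormedModule) _ _ (Hd _ _)).
  - rewrite Rmin_left in Hc by lra. rewrite Rmax_right in Hc by lra.
    assert (dS f c I > 0) by (apply Hp; lra).
    assert (dS f c I * (b - a) > 0) by (apply Rmult_lt_0_compat; lra).
    simpl in Heq. lra.
Qed.

Lemma decrI (f : R -> R -> R) :
  (forall S I, ex_derive (fun i => f S i) I) ->
  (forall S I, 0 <= S -> 0 <= I -> dI f S I <= 0) ->
  forall S a b, 0 <= S -> 0 <= a -> a <= b -> f S b <= f S a.
Proof.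
  intros Hd Hp S a b HS Ha Hab.
  destruct (Req_dec a b) as [<-|Hne]; [lra|].
  destruct (MVT_gen (fun i => f S i) a b (fun i => dI f S i)) as [c [Hc Heq]].
  - intros x _. apply Derive_correct. apply Hd.
  - intros x _. apply continuity_pt_filterlim. exact (ex_derive_continuous (V:=R_NormedModule) _ _ (Hd _ _)).
  - rewrite Rmin_left in Hc by lra. rewrite Rmax_right in Hc by lra.
    assert (dI f S c <= 0) by (apply Hp; lra).
    assert (dI f S c * (b - a) <= 0).
    { 
      assert (0 <= - dI f S c * (b - a)) by (apply Rmult_le_pos; lra). lra. }
    simpl in Heq. lra.
Qed.

Lemma f_zero (F f : R -> R -> R) : incidence_hyps F f -> forall I, 0 <= I -> f 0 I = 0.
Proof.
  intros [_ [[[_ [Hc _]] _] [_ [HIf [H0I _]]]]].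
  assert (Hp : forall I, 0 < I -> f 0 I = 0).
  { intros I HI. assert (E := HIf 0 I ltac:(lra) ltac:(lra)). rewrite H0I in E by lra.
    symmetry in E. apply Rmult_integral in E. destruct E; [lra|auto]. }
  intros I HI. destruct (Rle_lt_or_eq_dec 0 I HI) as [Hlt|<-]; [auto|].
  destruct (Req_dec (f 0 0) 0) as [|Hne]; [auto|].
  assert (He : 0 < Rabs (f 0 0)) by (apply Rabs_pos_lt; auto).
  destruct (Hc 0 0 (mkposreal _ He)) as [[d Hd] H]. simpl in H.
  assert (A := H 0 (d/2) ltac:(unfold Rminus; rewrite Rplus_opp_r, Rabs_R0; lra)
    ltac:(rewrite Rminus_0_r, Rabs_pos_eq; lra)).
  rewrite Hp in A by lra. rewrite Rminus_0_l, Rabs_Ropp in A. lra.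
Qed.

Lemma dI_zero (F f : R -> R -> R) : incidence_hyps F f -> forall S, 0 <= S -> dI F S 0 = f S 0.
Proof.
  intros [[[Hd _] _] [[[_ [Hc _]] _] [_ [HIf [_ [HS0 _]]]]]] S HS.
  unfold dI.
  assert (Hder := Derive_correct _ _ (proj2 (Hd S 0))).
  apply is_derive_Reals in Hder.
  set (D := Derive (fun i => F S i) 0) in *.
  destruct (Req_dec D (f S 0)) as [|Hne]; [auto|exfalso].
  assert (He : 0 < Rabs (D - f S 0) / 3).
  { assert (0 < Rabs (D - f S 0)) by (apply Rabs_pos_lt; lra). lra. }
  destruct (Hder _ He) as [[d1 Hd1] H1]. simpl in H1.
  destruct (Hc S 0 (mkposreal _ He)) as [[d2 Hd2] H2]. simpl in H2.
  set (h := Rmin d1 d2 / 2).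
  assert (Hh : 0 < h) by (unfold h; assert (0 < Rmin d1 d2) by (apply Rmin_pos; lra); lra).
  assert (Hh1 : h < d1) by (unfold h; assert (Rmin d1 d2 <= d1) by apply Rmin_l; assert (0 < Rmin d1 d2) by (apply Rmin_pos; lra); lra).
  assert (Hh2 : h < d2) by (unfold h; assert (Rmin d1 d2 <= d2) by apply Rmin_r; assert (0 < Rmin d1 d2) by (apply Rmin_pos; lra); lra).
  assert (A := H1 h ltac:(lra) ltac:(rewrite Rabs_pos_eq; lra)).
  rewrite Rplus_0_l, HS0 in A by lra.
  rewrite HIf in A by lra.
  replace ((h * f S h - 0) / h) with (f S h) in A by (field; lra).
  assert (B := H2 S h ltac:(unfold Rminus; rewrite Rplus_opp_r, Rabs_R0; lra)
    ltac:(rewrite Rminus_0_r, Rabs_pos_eq; lra)).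
  unfold D in *. revert A B. unfold Rabs. repeat destruct Rcase_abs; lra.
Qed.

Lemma Rmax0_lip x y : Rabs (Rmax 0 y - Rmax 0 x) <= Rabs (y - x).
Proof. unfold Rmax, Rabs. repeat destruct Rle_dec; repeat destruct Rcase_abs; lra. Qed.

Lemma clamp_lip M x y : Rabs (Rmax 0 (Rmin M y) - Rmax 0 (Rmin M x)) <= Rabs (y - x).
Proof. unfold Rmax, Rmin, Rabs. repeat destruct Rle_dec; repeat destruct Rcase_abs; lra. Qed.

Lemma cED_id x : cED (fun y => y) x.
Proof. apply cED_lip. intros; lra. Qed.

Theorem mainTheorem10 (Lam mu r k gamma1 gamma2 v1 v2 : R)
  (F1 f1 F2 f2 : R -> R -> R)
  (HLam : 0 < Lam) (Hmu : 0 < mu) (Hr : 0 < r) (Hk : 0 < k)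
  (Hg1 : 0 < gamma1) (Hg2 : 0 < gamma2) (Hv1 : 0 <= v1) (Hv2 : 0 <= v2)
  (HF1 : incidence_hyps F1 f1) (HF2 : incidence_hyps F2 f2)
  (Sb V1b I1b St V1t I2t : R)
  (HSb : 0 < Sb) (HV1b : 0 < V1b) (HI1b : 0 < I1b)
  (HE1 : is_equilibrium Lam mu r k gamma1 gamma2 v1 v2 F1 F2 Sb V1b I1b 0)
  (HSt : 0 < St) (HV1t : 0 < V1t) (HI2t : 0 < I2t)
  (HE2 : is_equilibrium Lam mu r k gamma1 gamma2 v1 v2 F1 F2 St V1t 0 I2t)
  (HR2 : (1 / (gamma2 + v2 + mu)) * dI F2 Sb 0 + k * V1b / (gamma2 + v2 + mu) > 1)
  (HR1 : (1 / (gamma1 + v1 + mu)) * dI F1 St 0 > 1) :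
  exists S V1 I1 I2 : R,
    0 < S /\ 0 < V1 /\ 0 < I1 /\ 0 < I2 /\
    is_equilibrium Lam mu r k gamma1 gamma2 v1 v2 F1 F2 S V1 I1 I2.
Proof.
  rewrite (dI_zero _ _ HF2) in HR2 by lra.
  rewrite (dI_zero _ _ HF1) in HR1 by lra.
  assert (f10 := f_zero _ _ HF1). assert (f20 := f_zero _ _ HF2).
  destruct HF1 as [_ [[[Hd1 [Hc1 _]] _] [Hpos1 [HIf1 [H0I1 [HS01 [Hder1 _]]]]]]].
  destruct HF2 as [_ [[[Hd2 [Hc2 _]] _] [Hpos2 [HIf2 [H0I2 [HS02 [Hder2 _]]]]]]].
  assert (incr1 := incrS f1 (fun S I => proj1 (Hd1 S I)) (fun S I a b => proj1 (Hder1 S I a b))).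
  assert (incr2 := incrS f2 (fun S I => proj1 (Hd2 S I)) (fun S I a b => proj1 (Hder2 S I a b))).
  assert (decr1 := decrI f1 (fun S I => proj2 (Hd1 S I)) (fun S I a b => proj2 (Hder1 S I a b))).
  assert (decr2 := decrI f2 (fun S I => proj2 (Hd2 S I)) (fun S I a b => proj2 (Hder2 S I a b))).
  set (a1 := gamma1 + v1 + mu) in *.
  set (a2 := gamma2 + v2 + mu) in *.
  assert (Ha1 : 0 < a1) by (unfold a1; lra).
  assert (Ha2 : 0 < a2) by (unfold a2; lra).
  destruct HE1 as [_ [_ [_ [_ [eS1 [eV1 [eI1 _]]]]]]].
  destruct HE2 as [_ [_ [_ [_ [eS2 [eV2 [_ eI2]]]]]]].
  unfold rhs_S, rhs_V1, rhs_I1, rhs_I2 in *. fold a1 a2 in eI1, eI2.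
  rewrite HS02 in eS1 by lra.
  rewrite HS01 in eS2 by lra.
  rewrite HIf1 in eI1 by lra. rewrite HIf1 in eS1 by lra.
  rewrite HIf2 in eI2 by lra. rewrite HIf2 in eS2 by lra.
  assert (Ef1b : f1 Sb I1b = a1).
  { apply Rmult_eq_reg_l with I1b; lra. }
  assert (HR1' : f1 St 0 > a1).
  { apply Rmult_gt_compat_l with (r:=a1) in HR1; [|lra].
    replace (a1 * (1 / a1 * f1 St 0)) with (f1 St 0) in HR1 by (field; lra). lra. }
  assert (HR2' : f2 Sb 0 + k * V1b > a2).
  { apply Rmult_gt_compat_l with (r:=a2) in HR2; [|lra].
    replace (a2 * (1 / a2 * f2 Sb 0 + k * V1b / a2)) with (f2 Sb 0 + k * V1b) in HR2 by (field; lra). lra. }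
  set (Q := fun S t => k * r * S * / (mu + k * t)).
  set (G2 := fun S t => f2 S t + Q S t - a2).
  set (phi := fun S t => (Lam - a2 * t + Q S t * t - (r + mu) * S) * / a1).
  set (c := fun t => Rmax 0 (Rmin I2t t)).
  assert (Hc_rng : forall t, 0 <= c t <= I2t).
  { intro t. unfold c, Rmax, Rmin. repeat destruct Rle_dec; lra. }
  assert (Hc_id : forall t, 0 <= t <= I2t -> c t = t).
  { intros t Ht. unfold c, Rmax, Rmin. repeat destruct Rle_dec; lra. }
  assert (Qmono : forall t a b, 0 <= t -> a <= b -> Q a t <= Q b t).
  { intros t a b Ht Hab. unfold Q.
    assert (0 < / (mu + k * t)) by (apply Rinv_0_lt_compat; nra).
    assert (0 <= k * r) by nra. 
    apply Rmult_le_compat_r; [lra|]. apply Rmult_le_compat_l; lra. }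
  assert (Qdecr : forall S t1 t2, 0 < S -> 0 <= t1 < t2 -> Q S t2 < Q S t1).
  { intros S t1 t2 HS Ht. unfold Q.
    apply Rmult_lt_compat_l; [apply Rmult_lt_0_compat; [nra|lra]|].
    assert (0 < mu + k * t1) by nra. assert (0 < mu + k * t2) by nra.
    apply Rinv_lt_contravar; [apply Rmult_lt_0_compat; lra|nra]. }
  assert (G2mono : forall t a b, 0 <= t -> 0 <= a -> a < b -> G2 a t < G2 b t).
  { intros t a b Ht Ha Hab. unfold G2.
    assert (f2 a t < f2 b t) by (apply incr2; lra).
    assert (Q a t <= Q b t) by (apply Qmono; lra). lra. }
  assert (G2decr : forall S t1 t2, 0 < S -> 0 <= t1 < t2 -> G2 S t2 < G2 S t1).
  { intros S t1 t2 HS Ht. unfold G2.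
    assert (f2 S t2 <= f2 S t1) by (apply decr2; lra).
    assert (Q S t2 < Q S t1) by (apply Qdecr; lra). lra. }
  assert (G20 : forall t, 0 <= t -> G2 0 t = - a2).
  { intros t Ht. unfold G2, Q. rewrite f20 by lra. ring. }
  assert (V1teq : V1t = Q St I2t / k).
  { unfold Q. apply Rmult_eq_reg_l with k; [|lra]; field_simplify_eq; [nra|nra]. }
  assert (G2t : G2 St I2t = 0).
  { unfold G2. replace (Q St I2t) with (k * V1t) by (rewrite V1teq; field; lra).
    apply Rmult_eq_reg_l with I2t; lra. }
  assert (phit : phi St I2t = 0).
  { unfold phi. replace (Q St I2t) with (k * V1t) by (rewrite V1teq; field; lra).
    replace (Lam - a2 * I2t + k * V1t * I2t - (r + mu) * St) with
      (Lam - I2t * f2 St I2t - (r + mu) * St) by nra. rewrite <- (Rmult_0_l (/ a1)). f_equal. lra. }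
  assert (G2b : G2 Sb 0 > 0).
  { unfold G2, Q. replace (k * r * Sb * / (mu + k * 0)) with (k * V1b).
    - lra.
    - assert (V1b = r * Sb / mu) by (field_simplify_eq; lra). subst V1b. field; lra. }
  assert (Qc : forall x y, 0 <= y -> continuity_2d_pt Q x y).
  { intros x y Hy. unfold Q.
    apply (continuity_2d_pt_mult (fun u v => k * r * u) (fun u v => / (mu + k * v))).
    - apply (continuity_2d_pt_mult (fun u v => k * r) (fun u v => u)).
      + apply continuity_2d_pt_const.
      + apply continuity_2d_pt_id1.
    - apply (continuity_2d_pt_inv (fun u v => mu + k * v)); [|nra].
      apply (continuity_2d_pt_plus (fun u v => mu) (fun u v => k * v)).
      + apply continuity_2d_pt_const.
      + apply (continuity_2d_pt_mult (fun u v => k) (fun u v => v)).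
        * apply continuity_2d_pt_const.
        * apply continuity_2d_pt_id2. }
  assert (G2c : forall x y, 0 <= y -> continuity_2d_pt G2 x y).
  { intros x y Hy. unfold G2.
    apply (continuity_2d_pt_minus (fun u v => f2 u v + Q u v) (fun u v => a2)).
    - apply (continuity_2d_pt_plus f2 Q); [apply Hc2|apply Qc; auto].
    - apply continuity_2d_pt_const. }
  assert (phic : forall x y, 0 <= y -> continuity_2d_pt phi x y).
  { intros x y Hy. unfold phi.
    apply (continuity_2d_pt_mult (fun u v => Lam - a2 * v + Q u v * v - (r + mu) * u) (fun u v => / a1)); [|apply continuity_2d_pt_const].
    apply (continuity_2d_pt_minus (fun u v => Lam - a2 * v + Q u v * v) (fun u v => (r + mu) * u)).
    - apply (continuity_2d_pt_plus (fun u v => Lam - a2 * v) (fun u v => Q u v * v)).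
      + apply (continuity_2d_pt_minus (fun u v => Lam) (fun u v => a2 * v)).
        * apply continuity_2d_pt_const.
        * apply (continuity_2d_pt_mult (fun u v => a2) (fun u v => v)).
          -- apply continuity_2d_pt_const.
          -- apply continuity_2d_pt_id2.
      + apply (continuity_2d_pt_mult Q (fun u v => v)); [apply Qc; auto|apply continuity_2d_pt_id2].
    - apply (continuity_2d_pt_mult (fun u v => r + mu) (fun u v => u)).
      + apply continuity_2d_pt_const.
      + apply continuity_2d_pt_id1. }
  assert (cc : forall t, cED c t).
  { intro t. apply cED_lip. intro y. apply clamp_lip. }
  assert (Hex : forall t, exists S, 0 < S <= St /\ G2 S (c t) = 0).
  { intro t. destruct (Hc_rng t) as [H0 H1].
    destruct (Req_dec (c t) I2t) as [Heq|Hne].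
    - exists St. rewrite Heq. split; [lra|exact G2t].
    - assert (Hpos : 0 < G2 St (c t)).
      { assert (G2 St I2t < G2 St (c t)) by (apply G2decr; lra). lra. }
      assert (Hcont : continuity (fun S => G2 S (c t))).
      { intro x. apply cED_pt.
        apply (cED_comp2 G2 (fun S => S) (fun _ => c t)).
        - apply G2c. lra.
        - apply cED_id.
        - apply cED_const. }
      destruct (IVT _ 0 St Hcont HSt) as [z [Hz Hz0]].
      + rewrite G20 by lra. lra.
      + exact Hpos.
      + exists z. split; [|exact Hz0].
        destruct (Req_dec z 0) as [->|]; [|lra]. rewrite G20 in Hz0 by lra. lra. }
  destruct (constructive_indefinite_description
     (fun sg : R -> R => forall t, 0 < sg t <= St /\ G2 (sg t) (c t) = 0)) as [sg Hsg].
  { exists (fun t => proj1_sig (constructive_indefinite_description _ (Hex t))).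
    intro t. exact (proj2_sig (constructive_indefinite_description _ (Hex t))). }
  assert (Huniq : forall t S1 S2, 0 <= t -> 0 <= S1 -> 0 <= S2 -> G2 S1 t = 0 -> G2 S2 t = 0 -> S1 = S2).
  { intros t S1 S2 Ht H1 H2 E1 E2.
    destruct (Rtotal_order S1 S2) as [Hl|[He|Hl]]; auto.
    - assert (G2 S1 t < G2 S2 t) by (apply G2mono; lra). lra.
    - assert (G2 S2 t < G2 S1 t) by (apply G2mono; lra). lra. }
  assert (sgc : forall t0, cED sg t0).
  { intros t0 eps He.
    destruct (Hsg t0) as [[Hs0 _] Hg0]. destruct (Hc_rng t0) as [Hct0 _].
    set (e := Rmin eps (sg t0 / 2)).
    assert (He1 : 0 < e) by (apply Rmin_pos; lra).
    assert (He2 : e <= eps) by apply Rmin_l.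
    assert (He3 : e <= sg t0 / 2) by apply Rmin_r.
    assert (Lo : G2 (sg t0 - e) (c t0) < 0).
    { assert (G2 (sg t0 - e) (c t0) < G2 (sg t0) (c t0)) by (apply G2mono; lra). lra. }
    assert (Hi : G2 (sg t0 + e) (c t0) > 0).
    { assert (G2 (sg t0) (c t0) < G2 (sg t0 + e) (c t0)) by (apply G2mono; lra). lra. }
    assert (CLo : cED (fun t => G2 (sg t0 - e) (c t)) t0).
    { apply (cED_comp2 G2 (fun _ => sg t0 - e) c); [apply G2c; lra|apply cED_const|apply cc]. }
    assert (CHi : cED (fun t => G2 (sg t0 + e) (c t)) t0).
    { apply (cED_comp2 G2 (fun _ => sg t0 + e) c); [apply G2c; lra|apply cED_const|apply cc]. }
    destruct (CLo (- G2 (sg t0 - e) (c t0))) as [d1 [Hdd1 H1]]; [lra|].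
    destruct (CHi (G2 (sg t0 + e) (c t0))) as [d2 [Hdd2 H2]]; [lra|].
    exists (Rmin d1 d2). split; [apply Rmin_pos; lra|]. intros y Hy.
    assert (A := H1 y ltac:(eapply Rlt_le_trans; [exact Hy|apply Rmin_l])).
    assert (B := H2 y ltac:(eapply Rlt_le_trans; [exact Hy|apply Rmin_r])).
    assert (A' : G2 (sg t0 - e) (c y) < 0) by (revert A; unfold Rabs; destruct Rcase_abs; lra).
    assert (B' : G2 (sg t0 + e) (c y) > 0) by (revert B; unfold Rabs; destruct Rcase_abs; lra).
    destruct (Hsg y) as [[Hsy _] Hgy]. destruct (Hc_rng y) as [Hcy _].
    assert (L1 : sg t0 - e < sg y).
    { destruct (Rlt_or_le (sg t0 - e) (sg y)) as [|Hle]; auto.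
      destruct (Rle_lt_or_eq_dec _ _ Hle) as [Hlt|Heq].
      - assert (G2 (sg y) (c y) < G2 (sg t0 - e) (c y)) by (apply G2mono; lra). lra.
      - rewrite <- Heq in A'. lra. }
    assert (L2 : sg y < sg t0 + e).
    { destruct (Rlt_or_le (sg y) (sg t0 + e)) as [|Hle]; auto.
      destruct (Rle_lt_or_eq_dec _ _ Hle) as [Hlt|Heq].
      - assert (G2 (sg t0 + e) (c y) < G2 (sg y) (c y)) by (apply G2mono; lra). lra.
      - rewrite Heq in B'. lra. }
    unfold Rabs. destruct Rcase_abs; lra. }
  set (Phi := fun t => f1 (sg t) (Rmax 0 (phi (sg t) (c t))) + - a1).
  assert (Phic : continuity Phi).
  { intro t. apply cED_pt. unfold Phi.
    apply (cED_plus (fun t => f1 (sg t) (Rmax 0 (phi (sg t) (c t)))) (fun _ => - a1)); [|apply cED_const].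
    apply (cED_comp2 f1 sg (fun t => Rmax 0 (phi (sg t) (c t)))); [apply Hc1|apply sgc|].
    apply (cED_comp (fun y => Rmax 0 y) (fun t => phi (sg t) (c t))).
    - apply (cED_comp2 phi sg c); [apply phic; apply Hc_rng|apply sgc|apply cc].
    - apply cED_lip. intro y. apply Rmax0_lip. }
  assert (Phi0 : Phi 0 < 0).
  { unfold Phi. rewrite (Hc_id 0) by lra.
    destruct (Hsg 0) as [[Hs0 _] Hg0]. rewrite (Hc_id 0) in Hg0 by lra.
    set (s0 := sg 0) in *.
    assert (Hs0b : s0 < Sb).
    { destruct (Rlt_or_le s0 Sb) as [|Hle]; auto.
      destruct (Rle_lt_or_eq_dec _ _ Hle) as [Hlt|Heq].
      - assert (G2 Sb 0 < G2 s0 0) by (apply G2mono; lra). lra.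
      - rewrite Heq in G2b. lra. }
    assert (Hphi : phi s0 0 = (Lam - (r + mu) * s0) / a1).
    { unfold phi. unfold Rdiv. f_equal. ring. }
    assert (Hphib : phi s0 0 > I1b).
    { rewrite Hphi. apply Rmult_lt_reg_l with a1; [lra|].
      replace (a1 * ((Lam - (r + mu) * s0) / a1)) with (Lam - (r + mu) * s0) by (field; lra).
      nra. }
    rewrite Rmax_right by lra.
    assert (f1 s0 (phi s0 0) <= f1 s0 I1b) by (apply decr1; lra).
    assert (f1 s0 I1b < f1 Sb I1b) by (apply incr1; lra).
    lra. }
  assert (PhiT : Phi I2t > 0).
  { unfold Phi. rewrite (Hc_id I2t) by lra.
    destruct (Hsg I2t) as [[Hs0 _] Hg0]. rewrite (Hc_id I2t) in Hg0 by lra.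
    assert (E : sg I2t = St) by (apply (Huniq I2t); lra).
    rewrite E, phit, Rmax_left by lra. lra. }
  destruct (IVT Phi 0 I2t Phic HI2t Phi0 PhiT) as [z [Hz HPz]].
  assert (Hz0 : z <> 0) by (intro; subst z; lra).
  assert (HzT : z <> I2t) by (intro; subst z; lra).
  assert (Hzr : 0 < z < I2t) by lra.
  unfold Phi in HPz. rewrite (Hc_id z) in HPz by lra.
  destruct (Hsg z) as [[HSz HSzt] HGz]. rewrite (Hc_id z) in HGz by lra.
  set (S := sg z) in *.
  set (p := / (mu + k * z)). set (q := / (mu + k * I2t)).
  assert (Hp : 0 < p) by (apply Rinv_0_lt_compat; nra).
  assert (Hq : 0 < q) by (apply Rinv_0_lt_compat; nra).
  assert (Hpp : p * (mu + k * z) = 1) by (unfold p; field; nra).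
  assert (Hqq : q * (mu + k * I2t) = 1) by (unfold q; field; nra).
  assert (Hf2z : 0 <= f2 S z) by (apply (Hpos2 S z); lra).
  assert (HQz : k * r * S * p <= a2).
  { unfold G2, Q in HGz. fold p in HGz. lra. }
  assert (Hid : a1 * (phi S z - phi St I2t) =
     (St - S) * (r + mu - k * r * I2t * q) + (I2t - z) * (a2 - k * r * S * p * (mu * q))).
  { unfold phi, Q. fold p q. field_simplify_eq; [|lra].
    assert (Ez : k * z * p = 1 - mu * p) by nra.
    assert (Et : k * I2t * q = 1 - mu * q) by nra.
    assert (Hkey : z*p - I2t*q + mu*p*q*(I2t - z) = 0).
    { apply Rmult_eq_reg_l with k; [|lra]. rewrite Rmult_0_r.
      replace (k * (z*p - I2t*q + mu*p*q*(I2t - z))) with ((k*z*p) - (k*I2t*q) + mu*p*(k*I2t*q) - mu*q*(k*z*p)) by ring.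
      rewrite Ez, Et. ring. }
    assert (H0 : k*r*S*(z*p - I2t*q + mu*p*q*(I2t - z)) = 0) by (rewrite Hkey; ring).
    lra. }
  assert (T1 : 0 <= (St - S) * (r + mu - k * r * I2t * q)).
  { apply Rmult_le_pos; [lra|].
    assert (Et : k * I2t * q = 1 - mu * q) by nra.
    assert (0 < mu * q) by nra.
    assert (k * r * I2t * q = r * (k * I2t * q)) by ring. nra. }
  assert (T2 : 0 < (I2t - z) * (a2 - k * r * S * p * (mu * q))).
  { apply Rmult_lt_0_compat; [lra|].
    assert (Et : k * I2t * q = 1 - mu * q) by nra.
    assert (0 < k * I2t * q) by (apply Rmult_lt_0_compat; nra).
    assert (mu * q < 1) by lra.
    assert (0 <= k * r * S * p) by (repeat apply Rmult_le_pos; lra).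
    assert (k * r * S * p * (mu * q) <= a2 * (mu * q)) by (apply Rmult_le_compat_r; nra).
    nra. }
  rewrite phit in Hid.
  assert (Hphiz : phi S z > 0) by nra.
  rewrite Rmax_right in HPz by lra.
  set (I1 := phi S z) in *.
  assert (Ef1 : f1 S I1 = a1) by lra.
  exists S, (r * S * p), I1, z.
  assert (HV : 0 < r * S * p) by (apply Rmult_lt_0_compat; nra).
  split; [lra|]. split; [lra|]. split; [lra|]. split; [lra|].
  unfold is_equilibrium, rhs_S, rhs_V1, rhs_I1, rhs_I2. fold a1 a2.
  rewrite (HIf1 S I1) by lra. rewrite (HIf2 S z) by lra. rewrite Ef1.
  assert (Ef2 : f2 S z = a2 - k * r * S * p) by (unfold G2, Q in HGz; fold p in HGz; lra).
  rewrite Ef2.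
  assert (HI1 : a1 * I1 = Lam - a2 * z + k * r * S * p * z - (r + mu) * S).
  { unfold I1, phi, Q. fold p. field. lra. }
  split; [lra|]. split; [lra|]. split; [lra|]. split; [lra|].
  split; [nra|]. split; [nra|]. split; [ring|]. ring.
Qed.
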